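(* Let $X\in\mathscr{C}^-$, $B\in\mathcal{H}$ and $x\in\mathscr{C}(X,B)$, and suppose there is a distinguished triangle $X\overset{x}{\to}B\to U\to X[1]$ with $U\in\mathcal{U}$. Let $z_X\colon X\to Z_X$ be obtained as follows: choose a distinguished triangle $V\to U'\overset{a}{\to}X\to V[1]$ with $U'\in\mathcal{U},V\in\mathcal{V}$; choose a distinguished triangle $T[-1]\to S[-1]\overset{b}{\to}U'\to T$ with $S\in\mathcal{S},T\in\mathcal{T}$; and choose a distinguished triangle $S[-1]\overset{a\circ b}{\to}X\overset{z_X}{\to}Z_X\to S$ (then $Z_X\in\mathcal{H}$). Then the unique morphism $\zeta\in\underline{\mathcal{H}}(Z_X,B)$ satisfying $\zeta\circ\underline{z}_X=\underline{x}$ in $\underline{\mathscr{C}}$ is an epimorphism in $\underline{\mathcal{H}}$.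
   Context: $\mathscr{C}$ is a triangulated category with shift $[1]$; subcategories are full, additive, closed under isomorphisms and direct summands. $\mathrm{Ext}^1(X,Y)=\mathscr{C}(X,Y[1])$. $\mathcal{M}\ast\mathcal{N}$ is the full subcategory of objects $C$ admitting a distinguished triangle $M\to C\to N\to M[1]$ with $M\in\mathcal{M}$, $N\in\mathcal{N}$. A cotorsion pair $(\mathcal{U},\mathcal{V})$: $\mathrm{Ext}^1(\mathcal{U},\mathcal{V})=0$ and $\mathscr{C}=\mathcal{U}\ast\mathcal{V}[1]$. Fix a twin cotorsion pair, i.e. cotorsion pairs $(\mathcal{S},\mathcal{T}),(\mathcal{U},\mathcal{V})$ with $\mathrm{Ext}^1(\mathcal{S},\mathcal{V})=0$. Put $\mathcal{W}=\mathcal{T}\cap\mathcal{U}$, $\mathscr{C}^-=\mathcal{S}[-1]\ast\mathcal{W}$, $\mathscr{C}^+=\mathcal{W}\ast\mathcal{V}[1]$, $\mathcal{H}=\mathscr{C}^+\cap\mathscr{C}^-$. $\underline{\mathscr{C}}$, $\underline{\mathcal{H}}$ are the ideal quotients of $\mathscr{C}$, $\mathcal{H}$ by morphisms factoring through objects of $\mathcal{W}$, and $\underline{f}$ is the image of $f$. (Existence and uniqueness of $\zeta$ hold since $-\circ\underline{z}_X\colon\underline{\mathscr{C}}(Z_X,Y)\to\underline{\mathscr{C}}(X,Y)$ is bijective for all $Y\in\mathscr{C}^+$.) *)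

(* Defs.v *)
From HB Require Import structures.
From mathcomp Require Import all_boot all_algebra.
Set Implicit Arguments. Unset Strict Implicit. Unset Printing Implicit Defensive.
Import GRing.Theory.
Local Open Scope ring_scope.

Record PreTri := {
  Obj :> Type;
  Mor : Obj -> Obj -> zmodType;
  mcomp : forall X Y Z : Obj, Mor Y Z -> Mor X Y -> Mor X Z;
  idm : forall X : Obj, Mor X X;
  sh : Obj -> Obj;
  shH : forall X Y : Obj, Mor X Y -> Mor (sh X) (sh Y);
  dist : forall X Y Z : Obj, Mor X Y -> Mor Y Z -> Mor Z (sh X) -> Prop
}.
Arguments Mor {C} X Y : rename.
Arguments mcomp {C X Y Z} g f : rename.
Arguments idm {C} X : rename.
Arguments sh {C} X : rename.
Arguments shH {C X Y} f : rename.
Arguments dist {C X Y Z} f g h : rename.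

Section TriDefs.
Context (C : PreTri).

Definition is_iso (X Y : C) (f : Mor X Y) : Prop :=
  exists g : Mor Y X, mcomp g f = idm X /\ mcomp f g = idm Y.

Definition isoObj (X Y : C) : Prop := exists f : Mor X Y, is_iso f.

Definition is_zero (Z : C) : Prop :=
  forall Y : C, (forall f g : Mor Z Y, f = g) /\ (forall f g : Mor Y Z, f = g).

Definition biprod (X Y P : C) : Prop :=
  exists (i1 : Mor X P) (i2 : Mor Y P) (p1 : Mor P X) (p2 : Mor P Y),
    [/\ mcomp p1 i1 = idm X, mcomp p2 i2 = idm Y, mcomp p1 i2 = 0, mcomp p2 i1 = 0
      & mcomp i1 p1 + mcomp i2 p2 = idm P].

Definition additive_category : Prop :=
  [/\ (forall (X Y Z W : C) (h : Mor Z W) (g : Mor Y Z) (f : Mor X Y),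
          mcomp h (mcomp g f) = mcomp (mcomp h g) f),
      (forall (X Y : C) (f : Mor X Y), mcomp (idm Y) f = f /\ mcomp f (idm X) = f),
      (forall (X Y Z : C) (g g' : Mor Y Z) (f : Mor X Y),
          mcomp (g + g') f = mcomp g f + mcomp g' f)
    & (forall (X Y Z : C) (g : Mor Y Z) (f f' : Mor X Y),
          mcomp g (f + f') = mcomp g f + mcomp g f')]
  /\ (exists Z : C, is_zero Z)
  /\ (forall X Y : C, exists P : C, biprod X Y P).

Definition shift_autoequivalence : Prop :=
  [/\ (forall X : C, shH (idm X) = idm (sh X)),
      (forall (X Y Z : C) (g : Mor Y Z) (f : Mor X Y),
          shH (mcomp g f) = mcomp (shH g) (shH f)),
      (forall (X Y : C) (f f' : Mor X Y), shH (f + f') = shH f + shH f'),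
      (forall X Y : C, bijective (@shH C X Y))
    & (forall X : C, exists Y : C, isoObj (sh Y) X)].

Definition TR1 : Prop :=
  [/\
      (forall (X Y Z X' Y' Z' : C) (f : Mor X Y) (g : Mor Y Z) (h : Mor Z (sh X))
              (f' : Mor X' Y') (g' : Mor Y' Z') (h' : Mor Z' (sh X'))
              (u : Mor X X') (v : Mor Y Y') (w : Mor Z Z'),
          is_iso u -> is_iso v -> is_iso w ->
          mcomp v f = mcomp f' u -> mcomp w g = mcomp g' v ->
          mcomp (shH u) h = mcomp h' w ->
          dist f g h -> dist f' g' h'),
      (forall X Z : C, is_zero Z -> dist (idm X) (0 : Mor X Z) (0 : Mor Z (sh X)))
    &
      (forall (X Y : C) (f : Mor X Y),
          exists (Z : C) (g : Mor Y Z) (h : Mor Z (sh X)), dist f g h)].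

Definition TR2 : Prop :=
  forall (X Y Z : C) (f : Mor X Y) (g : Mor Y Z) (h : Mor Z (sh X)),
    dist f g h <-> dist g h (- shH f).

Definition TR3 : Prop :=
  forall (X Y Z X' Y' Z' : C) (f : Mor X Y) (g : Mor Y Z) (h : Mor Z (sh X))
         (f' : Mor X' Y') (g' : Mor Y' Z') (h' : Mor Z' (sh X'))
         (u : Mor X X') (v : Mor Y Y'),
    dist f g h -> dist f' g' h' -> mcomp v f = mcomp f' u ->
    exists w : Mor Z Z', mcomp w g = mcomp g' v /\ mcomp (shH u) h = mcomp h' w.

Definition TR4 : Prop :=
  forall (X Y Z Z' X' Y' : C) (f : Mor X Y) (g : Mor Y Z)
         (f1 : Mor Y Z') (f2 : Mor Z' (sh X))
         (g1 : Mor Z X') (g2 : Mor X' (sh Y))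
         (h1 : Mor Z Y') (h2 : Mor Y' (sh X)),
    dist f f1 f2 -> dist g g1 g2 -> dist (mcomp g f) h1 h2 ->
    exists (u : Mor Z' Y') (v : Mor Y' X'),
      [/\ dist u v (mcomp (shH f1) g2),
          mcomp u f1 = mcomp h1 g, mcomp h2 u = f2,
          mcomp v h1 = g1 & mcomp g2 v = mcomp (shH f) h2].

Definition triangulated : Prop :=
  additive_category /\ shift_autoequivalence /\ TR1 /\ TR2 /\ TR3 /\ TR4.

Definition subcat (P : C -> Prop) : Prop :=
  [/\ (forall X Y : C, isoObj X Y -> P X -> P Y),
      (exists Z : C, is_zero Z /\ P Z),
      (forall X Y Q : C, biprod X Y Q -> P X -> P Y -> P Q)
    & (forall X Y Q : C, biprod X Y Q -> P Q -> P X)].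

Definition shift1 (P : C -> Prop) (X : C) : Prop :=
  exists Y : C, P Y /\ isoObj (sh Y) X.
Definition shiftm1 (P : C -> Prop) (X : C) : Prop :=
  exists Y : C, P Y /\ isoObj (sh X) Y.

Definition star (M N : C -> Prop) (X : C) : Prop :=
  exists (A B : C) (f : Mor A X) (g : Mor X B) (h : Mor B (sh A)),
    [/\ M A, N B & dist f g h].

Definition Ext1_vanish (P Q : C -> Prop) : Prop :=
  forall (X Y : C) (f : Mor X (sh Y)), P X -> Q Y -> f = 0.

Definition cotorsion_pair (P Q : C -> Prop) : Prop :=
  Ext1_vanish P Q /\ (forall X : C, star P (shift1 Q) X).

Definition twin_cotorsion_pair (S T U V : C -> Prop) : Prop :=
  [/\ cotorsion_pair S T, cotorsion_pair U V & Ext1_vanish S V].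

Definition Wc (T U : C -> Prop) (X : C) : Prop := T X /\ U X.
Definition Cminus (S T U : C -> Prop) : C -> Prop := star (shiftm1 S) (Wc T U).
Definition Cplus (T U V : C -> Prop) : C -> Prop := star (Wc T U) (shift1 V).
Definition Hc (S T U V : C -> Prop) (X : C) : Prop := Cplus T U V X /\ Cminus S T U X.

Definition factors_through (W : C -> Prop) (X Y : C) (f : Mor X Y) : Prop :=
  exists (Z : C) (g : Mor Z Y) (h : Mor X Z), W Z /\ f = mcomp g h.

Definition quot_eq (W : C -> Prop) (X Y : C) (f g : Mor X Y) : Prop :=
  factors_through W (f - g).

Definition quot_epi (W H : C -> Prop) (Z B : C) (zeta : Mor Z B) : Prop :=
  forall (D : C) (g h : Mor B D), H D ->
    quot_eq W (mcomp g zeta) (mcomp h zeta) -> quot_eq W g h.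

End TriDefs.

(* Main.v *)
Require Import Defs.
From HB Require Import structures.
From mathcomp Require Import all_boot all_algebra.
Set Implicit Arguments. Unset Strict Implicit. Unset Printing Implicit Defensive.
Import GRing.Theory.
Local Open Scope ring_scope.

Lemma morph0 (M N : zmodType) (phi : M -> N) : {morph phi : a b / a + b} -> phi 0 = 0.
Proof. move=> H; apply: (@addrI _ (phi 0)); by rewrite -H !addr0. Qed.

Lemma morphN (M N : zmodType) (phi : M -> N) : {morph phi : a b / a + b} ->
  forall a, phi (- a) = - phi a.
Proof. move=> H a; apply/eqP; by rewrite -addr_eq0 -H addNr (morph0 H). Qed.

Lemma morphB (M N : zmodType) (phi : M -> N) : {morph phi : a b / a + b} ->
  forall a b, phi (a - b) = phi a - phi b.
Proof. move=> H a b; by rewrite H (morphN H). Qed.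

Section Aux.
Variable C : PreTri.
Hypothesis HA : additive_category C.

Lemma compr_morph (X Y Z : C) (g : Mor Y Z) :
  {morph (fun f : Mor X Y => mcomp g f) : a b / a + b}.
Proof. case: HA => [[_ _ _ H] _] a b; exact: H. Qed.

Lemma compl_morph (X Y Z : C) (f : Mor X Y) :
  {morph (fun g : Mor Y Z => mcomp g f) : a b / a + b}.
Proof. case: HA => [[_ _ H _] _] a b; exact: H. Qed.

Lemma comp0r (X Y Z : C) (g : Mor Y Z) : mcomp g (0 : Mor X Y) = 0.
Proof. exact: (morph0 (compr_morph g)). Qed.
Lemma comp0l (X Y Z : C) (f : Mor X Y) : mcomp (0 : Mor Y Z) f = 0.
Proof. exact: (morph0 (compl_morph f)). Qed.
Lemma compNr (X Y Z : C) (g : Mor Y Z) (f : Mor X Y) : mcomp g (- f) = - mcomp g f.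
Proof. exact: (morphN (compr_morph g)). Qed.
Lemma compNl (X Y Z : C) (g : Mor Y Z) (f : Mor X Y) : mcomp (- g) f = - mcomp g f.
Proof. exact: (morphN (compl_morph f)). Qed.
Lemma compBr (X Y Z : C) (g : Mor Y Z) (f f' : Mor X Y) :
  mcomp g (f - f') = mcomp g f - mcomp g f'.
Proof. exact: (morphB (compr_morph g)). Qed.
Lemma compBl (X Y Z : C) (g g' : Mor Y Z) (f : Mor X Y) :
  mcomp (g - g') f = mcomp g f - mcomp g' f.
Proof. exact: (morphB (compl_morph f)). Qed.
Lemma compA (X Y Z W : C) (h : Mor Z W) (g : Mor Y Z) (f : Mor X Y) :
  mcomp h (mcomp g f) = mcomp (mcomp h g) f.
Proof. case: HA => [[H _ _ _] _]; exact: H. Qed.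
Lemma comp1l (X Y : C) (f : Mor X Y) : mcomp (idm Y) f = f.
Proof. case: HA => [[_ H _ _] _]; exact: (H _ _ f).1. Qed.
Lemma comp1r (X Y : C) (f : Mor X Y) : mcomp f (idm X) = f.
Proof. case: HA => [[_ H _ _] _]; exact: (H _ _ f).2. Qed.

End Aux.

Lemma zero_sh (C : PreTri) (HA : additive_category C) (HS : shift_autoequivalence C)
  (Z0 : C) : is_zero Z0 -> is_zero (sh Z0).
Proof.
move=> HZ.
have Hid : idm (sh Z0) = 0.
  case: HS => [H1 _ H3 _ _].
  rewrite -H1 ((HZ Z0).1 (idm Z0) 0).
  apply: morph0 => a b; exact: H3.
move=> Y; split=> f g.
- by rewrite -(comp1r HA f) -(comp1r HA g) Hid !comp0r.
- by rewrite -(comp1l HA f) -(comp1l HA g) Hid !comp0l.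
Qed.

Lemma exact1 (C : PreTri) (HC : triangulated C) (X Y Z W : C)
  (f : Mor X Y) (g : Mor Y Z) (h : Mor Z (sh X)) (k : Mor Y W) :
  dist f g h -> mcomp k f = 0 -> exists r : Mor Z W, mcomp r g = k.
Proof.
case: HC => HA [HS [[_ T12 _] [T2 [T3 _]]]] Hd Hkf.
case: (HA) => _ [[Z0 HZ] _].
have HZs := zero_sh HA HS HZ.
have D1 := T12 W (sh Z0) HZs.
have D2 : dist (0 : Mor Z0 W) (idm W) (0 : Mor W (sh Z0)).
  apply/T2.
  have -> : - shH (0 : Mor Z0 W) = 0 by apply: (HZs _).1.
  exact: D1.
have [r [Hr _]] := T3 _ _ _ _ _ _ f g h _ _ _ (0 : Mor X Z0) k Hd D2
  (etrans Hkf (esym (comp0l HA _ _))).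
by exists r; rewrite Hr (comp1l HA).
Qed.

Lemma exact2 (C : PreTri) (HC : triangulated C) (X Y Z W : C)
  (f : Mor X Y) (g : Mor Y Z) (h : Mor Z (sh X)) (k : Mor W Y) :
  dist f g h -> mcomp g k = 0 -> exists u : Mor W X, mcomp f u = k.
Proof.
case: HC => HA [HS [[_ T12 _] [T2 [T3 _]]]] Hd Hgk.
case: (HA) => _ [[Z0 HZ] _].
have D1 := T12 W Z0 HZ.
have D1' := proj1 (T2 _ _ _ _ _ _) D1.
have Hd' := proj1 (T2 _ _ _ _ _ _) Hd.
have [w [_ Hw]] := T3 _ _ _ _ _ _ _ _ _ _ _ _ k (0 : Mor Z0 Z) D1' Hd'
  (etrans (comp0l HA _ _) (esym Hgk)).
case: HS => [H1 H2 H3 H4 _].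
case: (H4 W X) => si Hsi1 Hsi2.
exists (si w).
apply: (bij_inj (H4 W Y)).
move: Hw; rewrite (compNr HA) (compNl HA) H1 (comp1r HA) => /oppr_inj ->.
by rewrite H2 Hsi2.
Qed.

Lemma vanish_sh (C : PreTri) (HA : additive_category C) (U V : C -> Prop)
  (HE : Ext1_vanish U V) (Z Bo : C) (m : Mor Z Bo) :
  U Z -> shift1 V Bo -> m = 0.
Proof.
move=> HZ [Vv [HVv [s [s' [Hs1 Hs2]]]]].
have -> : m = mcomp s (mcomp s' m) by rewrite (compA HA) Hs2 (comp1l HA).
by rewrite (HE _ _ (mcomp s' m) HZ HVv) (comp0r HA).
Qed.

Theorem lemma5p2 (C : PreTri) (HC : triangulated C)
  (S T U V : C -> Prop)
  (HSs : subcat S) (HTs : subcat T) (HUs : subcat U) (HVs : subcat V)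
  (Htw : twin_cotorsion_pair S T U V)
  (X B U0 : C) (HX : Cminus S T U X) (HB : Hc S T U V B)
  (x : Mor X B) (x1 : Mor B U0) (x2 : Mor U0 (sh X))
  (HU0 : U U0) (Hdx : dist x x1 x2)
  (V0 U' : C) (v : Mor V0 U') (a : Mor U' X) (w : Mor X (sh V0))
  (HV0 : V V0) (HU' : U U') (Hda : dist v a w)
  (T1 S1 : C) (t : Mor T1 S1) (b : Mor S1 U') (c : Mor U' (sh T1))
  (HT1 : T (sh T1)) (HS1 : S (sh S1)) (Hdb : dist t b c)
  (ZX : C) (zX : Mor X ZX) (e : Mor ZX (sh S1)) (Hdz : dist (mcomp a b) zX e)
  (zeta : Mor ZX B) (Hzeta : quot_eq (Wc T U) (mcomp zeta zX) x) :
  quot_epi (Wc T U) (Hc S T U V) zeta.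
Proof.
have HA : additive_category C by case: HC.
case: Htw => _ [HUV _] _.
move=> D g h [HD _] [Z1 [p [q [HW1 Hpq]]]].
rewrite -(compBl HA) in Hpq.
case: Hzeta => [Z2 [p2 [q2 [HW2 Hpq2]]]].
set f := g - h in Hpq *.
case: HD => [A [Bo [i [j [k [HWA HBo Hdi]]]]]].
have Hfx : mcomp (mcomp j f) x = 0.
  have -> : x = mcomp zeta zX - mcomp p2 q2 by rewrite -Hpq2 opprB addrC subrK.
  rewrite (compBr HA) (compA HA) -(compA HA j f zeta) Hpq (compA HA) (compA HA).
  rewrite (vanish_sh HA HUV (mcomp j p) HW1.2 HBo).
  rewrite (vanish_sh HA HUV (mcomp (mcomp j f) p2) HW2.2 HBo).
  by rewrite !(comp0l HA) subr0.
have [r Hr] := exact1 HC Hdx Hfx.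
have Hjf : mcomp j f = 0 by rewrite -Hr (vanish_sh HA HUV r HU0 HBo) (comp0l HA).
have [u Hu] := exact2 HC Hdi Hjf.
by exists A, i, u; split.
Qed.
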